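(* Let $0<\gamma<2$, $\gamma\neq 4/3$, let $V\in C^3(\mathbb{R})$ with $V\ge 0$, and let $\chi\in C^3(\mathbb{R})$ with $\chi>0$. Consider the flow of the system $(\ast)$ on $\Sigma$ (see context), and set $Z^+=\{(x,y,z,\phi)\in\Sigma: z>0\}$ and $X^0=\{(x,y,z,\phi)\in\Sigma: x=0\}$. Then for every $p\in Z^+\setminus X^0$ the $\alpha$-limit set and $\omega$-limit set of $p$ satisfy $\alpha(p)\subset X^0$ and $\omega(p)\subset\partial Z^+$, where $\partial Z^+$ denotes the boundary of $Z^+$ (the points of $\overline{Z^+}$ with $z=0$).
   Context: The system $(\ast)$ is the autonomous system in $(x,y,z,\phi)\in\mathbb{R}^4$ (prime denotes $d/d\tau$): $x'=\tfrac12 x(2y^2+\gamma z^2)$, $y'=y^3+\tfrac12(\gamma z^2-2)y-\dfrac{x^2 V'(\phi)}{3\sqrt6}+\dfrac{(4-3\gamma)z^2}{2\sqrt6}\,\dfrac{\chi'(\phi)}{\chi(\phi)}$, $z'=\tfrac12 z\big(2y^2+(z^2-1)\gamma\big)-\dfrac{(4-3\gamma)yz}{2\sqrt6}\,\dfrac{\chi'(\phi)}{\chi(\phi)}$, $\phi'=\sqrt{2/3}\,y$, considered on the state space $\Sigma=\{(x,y,z,\phi)\in\mathbb{R}^4: x\ge0,\ z\ge0,\ y^2+z^2+\tfrac13x^2V(\phi)=1\}$. (It arises from a flat FRW cosmology with scalar field $\phi$, potential $V$, coupling $\chi$ and a barotropic fluid of density $\rho$, via $x=1/H$, $y=\dot\phi/(\sqrt6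 H)$, $z=\sqrt{\rho}/(\sqrt3 H)$, $d\tau=3H\,dt$.) For a point $p$, $\omega(p)$ (resp. $\alpha(p)$) is the set of limits of $\psi_{t_i}(p)$ along sequences $t_i\to+\infty$ (resp. $t_i\to-\infty$), $\psi$ being the flow. *)

(* Defs.v *)
From Stdlib Require Import Reals Lra.
Open Scope R_scope.

Fixpoint Ck (k : nat) (f : R -> R) : Prop :=
  match k with
  | O => continuity f
  | S n => exists f' : R -> R,
      (forall t, derivable_pt_lim f t (f' t)) /\ Ck n f'
  end.

Record pt := mkpt { px : R; py : R; pz : R; pphi : R }.

(* The vector field of system (ast); dV, dchi are the derivatives V', chi'. *)
Definition field (gamma : R) (V dV chi dchi : R -> R) (p : pt) : pt :=
  let x := px p in let y := py p in let z := pz p in let phi := pphi p in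
  mkpt
    (/2 * x * (2 * y ^ 2 + gamma * z ^ 2))
    (y ^ 3 + /2 * (gamma * z ^ 2 - 2) * y
       - x ^ 2 * dV phi / (3 * sqrt 6)
       + (4 - 3 * gamma) * z ^ 2 / (2 * sqrt 6) * (dchi phi / chi phi))
    (/2 * z * (2 * y ^ 2 + (z ^ 2 - 1) * gamma)
       - (4 - 3 * gamma) * y * z / (2 * sqrt 6) * (dchi phi / chi phi))
    (sqrt (2 / 3) * y).

Definition is_solution (gamma : R) (V dV chi dchi : R -> R) (s : R -> pt) : Prop :=
  forall t,
    derivable_pt_lim (fun u => px (s u)) t (px (field gamma V dV chi dchi (s t))) /\
    derivable_pt_lim (fun u => py (s u)) t (py (field gamma V dV chi dchi (s t))) /\
    derivable_pt_lim (fun u => pz (s u)) t (pz (field gamma V dV chi dchi (s t))) /\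
    derivable_pt_lim (fun u => pphi (s u)) t (pphi (field gamma V dV chi dchi (s t))).

Definition in_Sigma (V : R -> R) (p : pt) : Prop :=
  0 <= px p /\ 0 <= pz p /\
  py p ^ 2 + pz p ^ 2 + / 3 * px p ^ 2 * V (pphi p) = 1.

Definition in_Zplus (V : R -> R) (p : pt) : Prop := in_Sigma V p /\ 0 < pz p.
Definition in_X0 (V : R -> R) (p : pt) : Prop := in_Sigma V p /\ px p = 0.

Definition pt_dist (p q : pt) : R :=
  Rabs (px p - px q) + Rabs (py p - py q) + Rabs (pz p - pz q) + Rabs (pphi p - pphi q).

Definition in_bdZplus (V : R -> R) (q : pt) : Prop :=
  (forall eps, 0 < eps -> exists r, in_Zplus V r /\ pt_dist r q < eps) /\ pz q = 0.

Definition pt_cv (u : nat -> pt) (q : pt) : Prop :=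
  Un_cv (fun n => px (u n)) (px q) /\ Un_cv (fun n => py (u n)) (py q) /\
  Un_cv (fun n => pz (u n)) (pz q) /\ Un_cv (fun n => pphi (u n)) (pphi q).

Definition omega_pt (s : R -> pt) (q : pt) : Prop :=
  exists t : nat -> R, cv_infty t /\ pt_cv (fun n => s (t n)) q.
Definition alpha_pt (s : R -> pt) (q : pt) : Prop :=
  exists t : nat -> R, cv_infty (fun n => - t n) /\ pt_cv (fun n => s (t n)) q.

(* Main.v *)
Require Import Defs.
From Stdlib Require Import Reals Lra Psatz Lia.
Open Scope R_scope.


Lemma D_plus f g t a b : derivable_pt_lim f t a -> derivable_pt_lim g t b ->
  derivable_pt_lim (fun u => f u + g u) t (a + b).
Proof. intros; apply (derivable_pt_lim_plus f g); auto. Qed.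
Lemma D_minus f g t a b : derivable_pt_lim f t a -> derivable_pt_lim g t b ->
  derivable_pt_lim (fun u => f u - g u) t (a - b).
Proof. intros; apply (derivable_pt_lim_minus f g); auto. Qed.
Lemma D_mult f g t a b : derivable_pt_lim f t a -> derivable_pt_lim g t b ->
  derivable_pt_lim (fun u => f u * g u) t (a * g t + f t * b).
Proof. intros; apply (derivable_pt_lim_mult f g); auto. Qed.
Lemma D_comp f g t a b : derivable_pt_lim g t a -> derivable_pt_lim f (g t) b ->
  derivable_pt_lim (fun u => f (g u)) t (b * a).
Proof. intros; apply (derivable_pt_lim_comp g f); auto. Qed.
Lemma D_const c t : derivable_pt_lim (fun _ => c) t 0.
Proof. apply derivable_pt_lim_const. Qed.
Lemma D_id t : derivable_pt_lim (fun u => u) t 1.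
Proof. apply derivable_pt_lim_id. Qed.
Lemma D_eq f t a b : derivable_pt_lim f t a -> a = b -> derivable_pt_lim f t b.
Proof. intros; subst; auto. Qed.
Lemma D_cont f t a : derivable_pt_lim f t a -> continuity_pt f t.
Proof. intro H; apply derivable_continuous_pt; exists a; exact H. Qed.

Lemma C_plus f g t : continuity_pt f t -> continuity_pt g t -> continuity_pt (fun u => f u + g u) t.
Proof. intros; apply (continuity_pt_plus f g); auto. Qed.
Lemma C_minus f g t : continuity_pt f t -> continuity_pt g t -> continuity_pt (fun u => f u - g u) t.
Proof. intros; apply (continuity_pt_minus f g); auto. Qed.
Lemma C_opp f t : continuity_pt f t -> continuity_pt (fun u => - f u) t.
Proof. intros; apply (continuity_pt_opp f); auto. Qed.
Lemma C_mult f g t : continuity_pt f t -> continuity_pt g t -> continuity_pt (fun u => f u * g u) t.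
Proof. intros; apply (continuity_pt_mult f g); auto. Qed.
Lemma C_comp f g t : continuity_pt g t -> continuity_pt f (g t) -> continuity_pt (fun u => f (g u)) t.
Proof. intros; apply (continuity_pt_comp g f); auto. Qed.
Lemma C_const c t : continuity_pt (fun _ => c) t.
Proof. apply continuity_pt_const; intros ? ?; auto. Qed.
Lemma C_inv f t : continuity_pt f t -> f t <> 0 -> continuity_pt (fun u => / f u) t.
Proof. intros; apply (continuity_pt_inv f); auto. Qed.
Lemma C_ext f g t : (forall u, f u = g u) -> continuity_pt f t -> continuity_pt g t.
Proof. intros He Hc; apply (continuity_pt_locally_ext f g 1 t); auto; lra. Qed.

Lemma cv_ext (u v : nat -> R) l : (forall n, u n = v n) -> Un_cv u l -> Un_cv v l.
Proof. intros He H eps Heps; destruct (H eps Heps) as [N HN]; exists N; intros n Hn; rewrite <- He; auto. Qed.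
Lemma cv_const c : Un_cv (fun _ => c) c.
Proof. intros eps Heps; exists O; intros; unfold Rdist; rewrite Rminus_diag, Rabs_R0; lra. Qed.
Lemma cv_sq u l : Un_cv u l -> Un_cv (fun n => u n ^ 2) (l ^ 2).
Proof. intro H. replace (l^2) with (l*l) by ring. apply cv_ext with (fun n => u n * u n). intro; ring.
 apply CV_mult; auto. Qed.

Lemma exp_to0 (u : nat -> R) c b : 0 < b -> cv_infty u -> Un_cv (fun n => exp (c - b * u n)) 0.
Proof.
  intros Hb Hu eps Heps. destruct (Hu ((c - ln eps)/b)) as [N HN]. exists N. intros n Hn.
  specialize (HN n Hn). unfold Rdist. rewrite Rminus_0_r, Rabs_pos_eq by (left; apply exp_pos).
  rewrite <- (exp_ln eps Heps). apply exp_increasing.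
  apply (Rmult_lt_compat_l b) in HN; auto. unfold Rdiv in HN.
  replace (b * ((c - ln eps) * / b)) with (c - ln eps) in HN by (field; lra). lra.
Qed.


Lemma bound_ab (a : R -> R) lo hi : lo <= hi -> (forall t, continuity_pt a t) ->
  exists K, forall c, lo <= c <= hi -> - K <= a c <= K.
Proof.
  intros Hle Hc. destruct (continuity_ab_maj a lo hi Hle (fun c _ => Hc c)) as [M [HM _]].
  destruct (continuity_ab_min a lo hi Hle (fun c _ => Hc c)) as [m [Hm _]].
  exists (Rabs (a M) + Rabs (a m)). intros c Hcc. specialize (HM c Hcc). specialize (Hm c Hcc).
  pose proof (Rle_abs (a M)); pose proof (Rle_abs (- a m)); rewrite Rabs_Ropp in *;
  pose proof (Rabs_pos (a M)); pose proof (Rabs_pos (a m)); split; lra.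
Qed.

Lemma v_deriv (w a : R -> R) L t0 t :
  (forall t, derivable_pt_lim w t (a t * w t)) ->
  derivable_pt_lim (fun u => w u * w u * exp (L * (u - t0))) t
     (exp (L * (t - t0)) * (w t * w t) * (2 * a t + L)).
Proof.
  intro Hw. eapply D_eq.
  - apply D_mult. apply D_mult; apply Hw.
    apply (D_comp exp (fun u => L * (u - t0))).
    + apply (D_eq _ _ (0 * (t - t0) + L * (1 - 0))). apply (D_mult (fun _ => L) (fun u => u - t0)). apply D_const. apply (D_minus (fun u => u) (fun _ => t0)). apply D_id. apply D_const. reflexivity.
    + apply derivable_pt_lim_exp.
  - simpl. ring.
Qed.

Lemma lin_zero (w a : R -> R) :
  (forall t, derivable_pt_lim w t (a t * w t)) -> (forall t, continuity_pt a t) ->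
  forall t0, w t0 = 0 -> forall t, w t = 0.
Proof.
  intros Hw Ha t0 H0 t.
  assert (Hsq : w t * w t <= 0 -> w t = 0) by (intro; nra).
  destruct (Rtotal_order t t0) as [Hlt | [Heq | Hgt]].
  - destruct (bound_ab a t t0 (Rlt_le _ _ Hlt) Ha) as [K HK].
    destruct (MVT_cor2 _ _ t t0 Hlt (fun c _ => v_deriv w a (2*K) t0 c Hw)) as [c [Hc Hcr]].
    specialize (HK c (conj (Rlt_le _ _ (proj1 Hcr)) (Rlt_le _ _ (proj2 Hcr)))).
    rewrite H0 in Hc. apply Hsq.
    assert (0 <= exp (2 * K * (c - t0)) * (w c * w c) * (2 * a c + 2 * K) * (t0 - t)).
    { apply Rmult_le_pos; [|lra]. apply Rmult_le_pos; [|lra]. apply Rmult_le_pos.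
      left; apply exp_pos. nra. }
    assert (0 < exp (2 * K * (t - t0))) by apply exp_pos. nra.
  - subst; rewrite H0; reflexivity.
  - destruct (bound_ab a t0 t (Rlt_le _ _ Hgt) Ha) as [K HK].
    destruct (MVT_cor2 _ _ t0 t Hgt (fun c _ => v_deriv w a (-(2*K)) t0 c Hw)) as [c [Hc Hcr]].
    specialize (HK c (conj (Rlt_le _ _ (proj1 Hcr)) (Rlt_le _ _ (proj2 Hcr)))).
    rewrite H0 in Hc. apply Hsq.
    assert (0 <= exp (-(2 * K) * (c - t0)) * (w c * w c) * -(2 * a c + -(2 * K)) * (t - t0)).
    { apply Rmult_le_pos; [|lra]. apply Rmult_le_pos; [|lra]. apply Rmult_le_pos.
      left; apply exp_pos. nra. }
    assert (0 < exp (-(2 * K) * (t - t0))) by apply exp_pos. nra.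
Qed.

Lemma lin_pos (w a : R -> R) :
  (forall t, derivable_pt_lim w t (a t * w t)) -> (forall t, continuity_pt a t) ->
  0 < w 0 -> forall t, 0 < w t.
Proof.
  intros Hw Ha H0 t. destruct (Rlt_le_dec 0 (w t)) as [h|h]; auto. exfalso.
  assert (Hc : continuity w) by (intro u; exact (D_cont _ _ _ (Hw u))).
  destruct (Rle_dec 0 t) as [Ht|Ht].
  - destruct (IVT_cor w 0 t Hc Ht) as [z [_ Hz]]. nra.
    pose proof (lin_zero w a Hw Ha z Hz 0). lra.
  - destruct (IVT_cor w t 0 Hc ltac:(lra)) as [z [_ Hz]]. nra.
    pose proof (lin_zero w a Hw Ha z Hz 0). lra.
Qed.


Lemma sigma_lim V (u : nat -> pt) q : (forall t, continuity_pt V t) -> pt_cv u q ->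
  (forall n, in_Sigma V (u n)) -> in_Sigma V q.
Proof.
  intros HV [Hx [Hy [Hz Hp]]] Hs. split; [|split].
  - apply (@Rle_cv_lim (fun _ => 0) (fun n => px (u n))); auto. intro n; apply (Hs n). apply cv_const.
  - apply (@Rle_cv_lim (fun _ => 0) (fun n => pz (u n))); auto. intro n; apply (Hs n). apply cv_const.
  - apply (UL_sequence (fun n => py (u n) ^ 2 + pz (u n) ^ 2 + / 3 * px (u n) ^ 2 * V (pphi (u n)))).
    + apply CV_plus. apply CV_plus; apply cv_sq; auto.
      apply CV_mult. apply CV_mult. apply cv_const. apply cv_sq; auto.
      apply (continuity_seq V (fun n => pphi (u n))); auto.
    + apply cv_ext with (fun _ => 1). intro n; symmetry; apply (Hs n). apply cv_const.
Qed.

Lemma bd_lim V (u : nat -> pt) q : pt_cv u q ->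
  (forall n, in_Zplus V (u n)) -> pz q = 0 -> in_bdZplus V q.
Proof.
  intros [Hx [Hy [Hz Hp]]] Hs H0. split; auto. intros eps Heps.
  assert (He : eps / 4 > 0) by lra.
  destruct (Hx _ He) as [N1 H1]. destruct (Hy _ He) as [N2 H2].
  destruct (Hz _ He) as [N3 H3]. destruct (Hp _ He) as [N4 H4].
  set (n := (N1 + N2 + N3 + N4)%nat).
  exists (u n). split; auto. unfold pt_dist.
  specialize (H1 n ltac:(unfold n; lia)). specialize (H2 n ltac:(unfold n; lia)).
  specialize (H3 n ltac:(unfold n; lia)). specialize (H4 n ltac:(unfold n; lia)).
  unfold Rdist in *. lra.
Qed.


Lemma sq6 : sqrt 6 * sqrt 6 = 6.
Proof. apply sqrt_sqrt; lra. Qed.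
Lemma sq6pos : 0 < sqrt 6.
Proof. apply sqrt_lt_R0; lra. Qed.
Lemma s23 : sqrt (2/3) = sqrt 6 / 3.
Proof. pose proof sq6pos. apply sqrt_lem_1; try lra.
 replace (sqrt 6 / 3 * (sqrt 6 / 3)) with (sqrt 6 * sqrt 6 / 9) by field. rewrite sq6. field. Qed.
Lemma d3 a : a / (3 * sqrt 6) = a * sqrt 6 / 18.
Proof. pose proof sq6pos. replace (a * sqrt 6 / 18) with (a * (sqrt 6 * sqrt 6) / (18 * sqrt 6)) by (field; lra). rewrite sq6. field; lra. Qed.
Lemma d2 a : a / (2 * sqrt 6) = a * sqrt 6 / 12.
Proof. pose proof sq6pos. replace (a * sqrt 6 / 12) with (a * (sqrt 6 * sqrt 6) / (12 * sqrt 6)) by (field; lra). rewrite sq6. field; lra. Qed.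

Theorem lemma1 (gamma : R) (V dV chi dchi : R -> R) (s : R -> pt) :
  0 < gamma -> gamma < 2 -> gamma <> 4 / 3 ->
  Ck 3 V -> (forall t, derivable_pt_lim V t (dV t)) -> (forall t, 0 <= V t) ->
  Ck 3 chi -> (forall t, derivable_pt_lim chi t (dchi t)) -> (forall t, 0 < chi t) ->
  is_solution gamma V dV chi dchi s ->
  in_Zplus V (s 0) -> ~ in_X0 V (s 0) ->
  (forall q, alpha_pt s q -> in_X0 V q) /\
  (forall q, omega_pt s q -> in_bdZplus V q).
Proof.
  intros Hg0 Hg2 _ HCV HdV HV0 HCc Hdc Hc0 Hsol [[Hx0 [Hz0 HS0]] Hzp] HnX.
  set (r := sqrt 6).
  set (X := fun u => px (s u)). set (Y := fun u => py (s u)).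
  set (Z := fun u => pz (s u)). set (P := fun u => pphi (s u)).
  assert (HX : forall t, derivable_pt_lim X t ((Y t * Y t + gamma / 2 * (Z t * Z t)) * X t)).
  { intro t; destruct (Hsol t) as [h _]; eapply D_eq; [exact h|]. unfold field; simpl. unfold X, Y, Z. field. }
  assert (HY : forall t, derivable_pt_lim Y t (Y t ^ 3 + / 2 * (gamma * Z t ^ 2 - 2) * Y t
        - X t ^ 2 * dV (P t) * r / 18 + (4 - 3 * gamma) * Z t ^ 2 * r / 12 * (dchi (P t) / chi (P t)))).
  { intro t; destruct (Hsol t) as [_ [h _]]; eapply D_eq; [exact h|]. unfold field; simpl.
    rewrite d3, d2. unfold X, Y, Z, P, r. field; pose proof (Hc0 (pphi (s t))); lra. }
  assert (HZ : forall t, derivable_pt_lim Z t ((Y t * Y t + (Z t * Z t - 1) * (gamma / 2)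
        - (4 - 3 * gamma) * r / 12 * Y t * (dchi (P t) * / chi (P t))) * Z t)).
  { intro t; destruct (Hsol t) as [_ [_ [h _]]]; eapply D_eq; [exact h|]. unfold field; simpl.
    rewrite d2. unfold X, Y, Z, P, r. field; pose proof (Hc0 (pphi (s t))); lra. }
  assert (HP : forall t, derivable_pt_lim P t (r / 3 * Y t)).
  { intro t; destruct (Hsol t) as [_ [_ [_ h]]]; eapply D_eq; [exact h|]. unfold field; simpl.
    rewrite s23. unfold Y, r. field. }
  assert (cX : forall t, continuity_pt X t) by (intro t; exact (D_cont _ _ _ (HX t))).
  assert (cY : forall t, continuity_pt Y t) by (intro t; exact (D_cont _ _ _ (HY t))).
  assert (cZ : forall t, continuity_pt Z t) by (intro t; exact (D_cont _ _ _ (HZ t))).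
  assert (cP : forall t, continuity_pt P t) by (intro t; exact (D_cont _ _ _ (HP t))).
  assert (cV : forall t, continuity_pt V t) by (intro t; exact (D_cont _ _ _ (HdV t))).
  assert (cchi : forall t, continuity_pt chi t) by (intro t; exact (D_cont _ _ _ (Hdc t))).
  assert (cdchi : forall t, continuity_pt dchi t).
  { destruct HCc as [f1 [Hf1 [f2 [Hf2 _]]]]. intro t. apply (C_ext f1).
    intro u; exact (uniqueness_limite chi u _ _ (Hf1 u) (Hdc u)). exact (D_cont _ _ _ (Hf2 t)). }
  assert (chin : forall t, chi t <> 0) by (intro t; pose proof (Hc0 t); lra).
  Ltac ctac cX cY cZ cP cV cchi cdchi chin P dchi chi := repeat first [apply C_minus | apply C_plus | apply C_opp | apply C_mult | apply C_inv
     | apply C_const | apply cX | apply cY | apply cZ | apply cP | apply cV | apply cchi | apply cdchi | apply chin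
     | apply (C_comp dchi P) | apply (C_comp chi P) | (apply Rgt_not_eq; lra) ].
  assert (Xpos : forall t, 0 < X t).
  { apply (lin_pos X (fun t => Y t * Y t + gamma / 2 * (Z t * Z t)) HX).
    intro t; ctac cX cY cZ cP cV cchi cdchi chin P dchi chi.
    destruct Hx0 as [h|h]; auto. exfalso; apply HnX; split; [repeat split; auto; lra | symmetry; exact h]. }
  assert (Zpos : forall t, 0 < Z t).
  { eapply (lin_pos Z _ HZ).
    intro t; ctac cX cY cZ cP cV cchi cdchi chin P dchi chi. exact Hzp. }
  Ltac dtac HX HY HZ HP HdV V P := repeat first [apply D_minus | apply D_plus | apply D_mult | apply D_const
     | apply D_id | apply HX | apply HY | apply HZ | apply HP | apply (D_comp V P) | apply HdV ].
  set (g := fun u => Y u * Y u + Z u * Z u + / 3 * (X u * X u) * V (P u) - 1).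
  assert (Hg : forall t, derivable_pt_lim g t ((2 * (Y t * Y t) + gamma * (Z t * Z t)) * g t)).
  { intro t. eapply D_eq. unfold g. dtac HX HY HZ HP HdV V P.
    unfold g. field. apply chin. }
  assert (Gz : forall u, g u = 0).
  { apply (lin_zero g _ Hg) with (t0 := 0). intro t; ctac cX cY cZ cP cV cchi cdchi chin P dchi chi.
    unfold g, X, Y, Z, P. simpl in HS0. lra. }
  assert (inS : forall u, in_Sigma V (s u)).
  { intro u. pose proof (Gz u) as h. pose proof (Xpos u). pose proof (Zpos u).
    unfold g, X, Y, Z, P in *. split; [lra | split; [lra | simpl; lra]]. }
  set (k := (4 - 3 * gamma) / 4).
  set (N := fun u => ln (Z u) - ln (X u) + k * ln (chi (P u)) + gamma / 2 * u).
  assert (HN : forall t, derivable_pt_lim N t 0).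
  { intro t. eapply D_eq. unfold N.
    apply D_plus. apply D_plus. apply D_minus.
    apply (D_comp ln Z). apply HZ. apply derivable_pt_lim_ln, Zpos.
    apply (D_comp ln X). apply HX. apply derivable_pt_lim_ln, Xpos.
    apply (D_mult (fun _ => k) (fun u => ln (chi (P u)))). apply D_const.
    apply (D_comp ln (fun u => chi (P u))). apply (D_comp chi P). apply HP. apply Hdc.
    apply derivable_pt_lim_ln, Hc0.
    apply (D_mult (fun _ => gamma / 2) (fun u => u)). apply D_const. apply D_id.
    unfold k. field. repeat split; [apply chin | apply Rgt_not_eq, Xpos | apply Rgt_not_eq, Zpos]. }
  assert (Nc : forall u, N u = N 0).
  { intro u. destruct (Rtotal_order u 0) as [h|[h|h]].
    - destruct (MVT_cor2 N (fun _ => 0) u 0 h (fun c _ => HN c)) as [c [Hc _]]. lra.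
    - subst; reflexivity.
    - destruct (MVT_cor2 N (fun _ => 0) 0 u h (fun c _ => HN c)) as [c [Hc _]]. lra. }
  set (N0 := N 0).
  assert (Zrep : forall u, Z u = X u * exp (- k * ln (chi (P u))) * exp (N0 - gamma / 2 * u)).
  { intro u. rewrite <- (exp_ln (Z u)) by apply Zpos. rewrite <- (exp_ln (X u)) at 1 by apply Xpos.
    rewrite <- !exp_plus. f_equal. pose proof (Nc u). unfold N0; unfold N in *. lra. }
  assert (Xrep : forall u, X u = Z u * exp (k * ln (chi (P u))) * exp (- N0 - gamma / 2 * - u)).
  { intro u. rewrite <- (exp_ln (X u)) by apply Xpos. rewrite <- (exp_ln (Z u)) at 1 by apply Zpos.
    rewrite <- !exp_plus. f_equal. pose proof (Nc u). unfold N0; unfold N in *. lra. }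
  assert (ch : forall c v, continuity_pt (fun v => exp (c * ln (chi v))) v).
  { intros c v. apply (C_comp exp (fun v => c * ln (chi v))).
    apply (C_mult (fun _ => c) (fun v => ln (chi v))). apply C_const.
    apply (C_comp ln chi). apply cchi. exact (D_cont _ _ _ (derivable_pt_lim_ln _ (Hc0 v))).
    exact (D_cont _ _ _ (derivable_pt_lim_exp _)). }
  split.
  - intros q [t [Ht Hcv]]. split.
    + apply (sigma_lim V (fun n => s (t n))); auto.
    + destruct Hcv as [Hx [Hy [Hz Hp]]].
      apply (UL_sequence (fun n => X (t n))). exact Hx.
      replace 0 with (pz q * exp (k * ln (chi (pphi q))) * 0) by ring.
      apply cv_ext with (fun n => Z (t n) * exp (k * ln (chi (P (t n)))) * exp (- N0 - gamma / 2 * - t n)).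
      intro n; symmetry; apply Xrep.
      apply CV_mult. apply CV_mult. exact Hz.
      apply (continuity_seq (fun v => exp (k * ln (chi v))) (fun n => P (t n))). apply ch. exact Hp.
      apply (exp_to0 (fun n => - t n)); auto; lra.
  - intros q [t [Ht Hcv]]. apply (bd_lim V (fun n => s (t n))); auto.
    { intro n; split; auto. apply Zpos. }
    destruct Hcv as [Hx [Hy [Hz Hp]]].
    apply (UL_sequence (fun n => Z (t n))). exact Hz.
    replace 0 with (px q * exp (- k * ln (chi (pphi q))) * 0) by ring.
    apply cv_ext with (fun n => X (t n) * exp (- k * ln (chi (P (t n)))) * exp (N0 - gamma / 2 * t n)).
    intro n; symmetry; apply Zrep.
    apply CV_mult. apply CV_mult. exact Hx.
    apply (continuity_seq (fun v => exp (- k * ln (chi v))) (fun n => P (t n))). apply ch. exact Hp.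
    apply (exp_to0 t); auto; lra.
Qed.
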